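(* Let $R$ be an arithmetic ring and $M$ a finitely generated $R$-module. If $M$ has a pure-composition series $\{0\}=M_0\subset\dots\subset M_n=M$ with nonzero cyclic factors and an increasing annihilator sequence, then $n=\mu(M)$, the minimal number of generators of $M$.
   Context: All rings are commutative with identity. $R$ is arithmetic if $R_P$ is a valuation ring (ideals totally ordered) for every maximal ideal $P$. A submodule $F\subseteq E$ is pure if $0\to F\to E\to E/F\to0$ stays exact under tensoring with every module. A pure-composition series of $M$ is a finite chain $\{0\}=M_0\subset M_1\subset\dots\subset M_n=M$ (strict inclusions) of pure submodules; its annihilator sequence is $(A_i)$ with $A_i=\mathrm{ann}(M_i/M_{i-1})$, increasing if $A_1\subseteq\dots\subseteq A_n$. *)

(* Defs.v *)
From HB Require Import structures.
From mathcomp Require Import all_boot all_algebra.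
Set Implicit Arguments. Unset Strict Implicit. Unset Printing Implicit Defensive.
Import GRing.Theory.
Local Open Scope ring_scope.

Section RingDefs.
Variable R : comPzRingType.

Definition ideal (I : R -> Prop) : Prop :=
  [/\ I 0, (forall a b, I a -> I b -> I (a + b)) & (forall r a, I a -> I (r * a))].

Definition maximal_ideal (P : R -> Prop) : Prop :=
  [/\ ideal P, ~ P 1 &
      forall J : R -> Prop, ideal J -> (forall a, P a -> J a) ->
        (forall a, J a -> P a) \/ J 1].

(** The localization R_P, written out literally: fractions (a, s) with s
    outside P, modulo (a,s) ~ (b,t) iff u (a t - b s) = 0 for some u
    outside P.  An ideal of R_P is a saturated set of such fractions
    containing 0 and closed under sums and multiplication by fractions. *)
Definition frac_equiv (P : R -> Prop) (x y : R * R) : Prop :=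
  exists u, ~ P u /\ u * (x.1 * y.2 - y.1 * x.2) = 0.

Definition loc_ideal (P : R -> Prop) (I : R * R -> Prop) : Prop :=
  [/\ (forall x, I x -> ~ P x.2),
      (forall x y, I x -> ~ P y.2 -> frac_equiv P x y -> I y),
      I (0, 1),
      (forall x y, I x -> I y -> I (x.1 * y.2 + y.1 * x.2, x.2 * y.2)) &
      (forall c x, ~ P c.2 -> I x -> I (c.1 * x.1, c.2 * x.2))].

Definition loc_valuation (P : R -> Prop) : Prop :=
  forall I J, loc_ideal P I -> loc_ideal P J ->
    (forall x, I x -> J x) \/ (forall x, J x -> I x).

Definition arithmetic : Prop :=
  forall P, maximal_ideal P -> loc_valuation P.

Definition submodule (M : lmodType R) (A : M -> Prop) : Prop :=
  [/\ A 0, (forall x y, A x -> A y -> A (x + y)) & (forall r x, A x -> A (r *: x))].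

Definition bilinear_on (N E T : lmodType R) (F : E -> Prop) (B : N -> E -> T) : Prop :=
  [/\ (forall x n1 n2, F x -> B (n1 + n2) x = B n1 x + B n2 x),
      (forall x r n, F x -> B (r *: n) x = r *: B n x),
      (forall n x y, F x -> F y -> B n (x + y) = B n x + B n y) &
      (forall n r x, F x -> B n (r *: x) = r *: B n x)].

(** The element \sum_i n_i (x) f_i of N (x)_R F is zero (universal property of
    the tensor product: it is killed by every bilinear map on N x F). *)
Definition tensor_zero_on (N E : lmodType R) (F : E -> Prop) (s : seq (N * E)) : Prop :=
  forall (T : lmodType R) (B : N -> E -> T), bilinear_on F B ->
    \sum_(p <- s) B p.1 p.2 = 0.

(** F is a pure submodule of E: for every module N, N (x) F -> N (x) E is
    injective (tensoring 0 -> F -> E -> E/F -> 0 stays exact; right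
    exactness is automatic). *)
Definition pure (E : lmodType R) (F : E -> Prop) : Prop :=
  submodule F /\
  forall (N : lmodType R) (s : seq (N * E)),
    (forall p, p \in s -> F p.2) ->
    tensor_zero_on (fun _ => True) s -> tensor_zero_on F s.

Definition strict_subset (M : lmodType R) (A B : M -> Prop) : Prop :=
  (forall x, A x -> B x) /\ exists x, B x /\ ~ A x.

Definition pure_composition_series (M : lmodType R) (Ms : nat -> M -> Prop) (n : nat) : Prop :=
  [/\ (forall x, Ms 0%N x <-> x = 0),
      (forall x, Ms n x),
      (forall i, (i <= n)%N -> pure (Ms i)) &
      (forall i, (i < n)%N -> strict_subset (Ms i) (Ms i.+1))].

Definition cyclic_nonzero_quotient (M : lmodType R) (A B : M -> Prop) : Prop :=
  (exists x, A x /\ forall y, A y -> exists r, B (y - r *: x)) /\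
  (exists y, A y /\ ~ B y).

Definition ann_quotient (M : lmodType R) (A B : M -> Prop) (r : R) : Prop :=
  forall x, A x -> B (r *: x).

Definition generates (M : lmodType R) (s : seq M) : Prop :=
  forall m : M, exists c : 'I_(size s) -> R, m = \sum_(i < size s) c i *: s`_i.

Definition finitely_generated (M : lmodType R) : Prop :=
  exists s : seq M, generates s.

Definition min_num_generators (M : lmodType R) (k : nat) : Prop :=
  (exists s : seq M, size s = k /\ generates s) /\
  (forall s : seq M, generates s -> (k <= size s)%N).

End RingDefs.

(* Main.v *)
From HB Require Import structures.
Require Import Defs.
From mathcomp Require Import all_boot all_algebra.
From Stdlib Require Import ClassicalEpsilon FunctionalExtensionality PropExtensionality.
Set Implicit Arguments. Unset Strict Implicit. Unset Printing Implicit Defensive.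
Import GRing.Theory.
Local Open Scope ring_scope.


Section Quot.
Variable R : comPzRingType.
Variable V : lmodType R.
Variable P : V -> Prop.
Hypothesis HP : submodule P.

Lemma P0 : P 0. Proof. by case: HP. Qed.
Lemma PD x y : P x -> P y -> P (x + y). Proof. by case: HP => _ H _; apply: H. Qed.
Lemma PZ r x : P x -> P (r *: x). Proof. by case: HP => _ _ H; apply: H. Qed.
Lemma PN x : P x -> P (- x). Proof. by move=> h; rewrite -scaleN1r; apply: PZ. Qed.
Lemma PB x y : P x -> P y -> P (x - y). Proof. by move=> hx hy; apply: PD => //; apply: PN. Qed.
Lemma Psym x y : P (x - y) -> P (y - x).
Proof. by move=> h; rewrite -opprB; apply: PN. Qed.
Lemma Ptrans x y z : P (x - y) -> P (y - z) -> P (x - z).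
Proof. move=> h1 h2; have := PD h1 h2; by rewrite addrA subrK. Qed.

Definition qnorm (v : V) : V := epsilon (inhabits 0) (fun w => P (w - v)).

Lemma qnormP v : P (qnorm v - v).
Proof. apply: (epsilon_spec (inhabits 0) (fun w => P (w - v))). exists v; rewrite subrr; exact: P0. Qed.

Lemma qnorm_eq v w : P (v - w) -> qnorm v = qnorm w.
Proof.
move=> h; rewrite /qnorm; congr epsilon.
apply: functional_extensionality => u; apply: propositional_extensionality; split => H.
- apply: Ptrans H h.
- apply: Ptrans H (Psym h).
Qed.

Lemma qnormK v : qnorm (qnorm v) = qnorm v.
Proof. apply: qnorm_eq; exact: qnormP. Qed.

Definition quot := let _ := HP in {v : V | qnorm v == v}.
HB.instance Definition _ := Choice.on quot.

Definition qpi (v : V) : quot := exist _ (qnorm v) (introT eqP (qnormK v)).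

Lemma qpi_eq v w : P (v - w) -> qpi v = qpi w.
Proof. move=> h; apply: val_inj => /=; exact: qnorm_eq. Qed.

Lemma qpi_eqP v w : qpi v = qpi w -> P (v - w).
Proof.
move=> /(congr1 val) /= e.
have h1 := qnormP v; have h2 := qnormP w.
rewrite e in h1. apply: Ptrans (Psym h1) h2.
Qed.

Lemma qpiK (q : quot) : qpi (val q) = q.
Proof. apply: val_inj => /=; case: q => v /= /eqP //. Qed.

Lemma quotW (Q : quot -> Prop) : (forall v, Q (qpi v)) -> forall q, Q q.
Proof. by move=> h q; rewrite -(qpiK q). Qed.

Definition qadd (a b : quot) : quot := qpi (val a + val b).
Definition qopp (a : quot) : quot := qpi (- val a).
Definition qzero : quot := qpi 0.
Definition qscale (r : R) (a : quot) : quot := qpi (r *: val a).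

Lemma qvalP v : P (val (qpi v) - v). Proof. exact: qnormP. Qed.

Lemma qaddE v w : qadd (qpi v) (qpi w) = qpi (v + w).
Proof.
apply: qpi_eq; have := PD (qvalP v) (qvalP w).
by rewrite addrACA opprD.
Qed.
Lemma qoppE v : qopp (qpi v) = qpi (- v).
Proof. apply: qpi_eq; have := PN (qvalP v); by rewrite opprB opprK addrC. Qed.
Lemma qscaleE r v : qscale r (qpi v) = qpi (r *: v).
Proof. apply: qpi_eq; have := PZ r (qvalP v); by rewrite scalerBr. Qed.

Lemma qaddA : associative qadd.
Proof. elim/quotW=> x; elim/quotW=> y; elim/quotW=> z; by rewrite !qaddE addrA. Qed.
Lemma qaddC : commutative qadd.
Proof. elim/quotW=> x; elim/quotW=> y; by rewrite !qaddE addrC. Qed.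
Lemma qadd0 : left_id qzero qadd.
Proof. elim/quotW=> x; by rewrite /qzero qaddE add0r. Qed.
Lemma qaddN : left_inverse qzero qopp qadd.
Proof. elim/quotW=> x; by rewrite qoppE qaddE addNr. Qed.

HB.instance Definition _ := GRing.isZmodule.Build quot qaddA qaddC qadd0 qaddN.

Lemma qscaleA a b v : qscale a (qscale b v) = qscale (a * b) v.
Proof. elim/quotW: v => x; by rewrite !qscaleE scalerA. Qed.
Lemma qscale1 : left_id 1 qscale.
Proof. elim/quotW=> x; by rewrite qscaleE scale1r. Qed.
Lemma qscaleDr : right_distributive qscale +%R.
Proof. move=> r; elim/quotW=> x; elim/quotW=> y.
change (qscale r (qadd (qpi x) (qpi y)) = qadd (qscale r (qpi x)) (qscale r (qpi y))).
rewrite qaddE !qscaleE qaddE. by rewrite scalerDr. Qed.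
Lemma qscaleDl v : {morph qscale^~ v: a b / a + b}.
Proof. elim/quotW: v => x a b.
change (qscale (a + b) (qpi x) = qadd (qscale a (qpi x)) (qscale b (qpi x))).
by rewrite !qscaleE qaddE scalerDl. Qed.

HB.instance Definition _ := GRing.Zmodule_isLmodule.Build R quot qscaleA qscale1 qscaleDr qscaleDl.

Lemma qpiD v w : qpi (v + w) = qpi v + qpi w. Proof. by rewrite -qaddE. Qed.
Lemma qpiZ r v : qpi (r *: v) = r *: qpi v. Proof. by rewrite -qscaleE. Qed.
Lemma qpi0 : qpi 0 = 0. Proof. by []. Qed.
Lemma qpi0P v : qpi v = 0 -> P v.
Proof. move=> h; have := qpi_eqP (etrans h (esym qpi0)); by rewrite subr0. Qed.

End Quot.


Section AMsec.
Variable R : comPzRingType.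
Variable E : lmodType R.

Inductive AM (A : R -> Prop) (F : E -> Prop) : E -> Prop :=
| AM0 : AM A F 0
| AMadd a f y : A a -> F f -> AM A F y -> AM A F (a *: f + y).

Lemma dbl0 (T : zmodType) (x : T) : x = x + x -> x = 0.
Proof. by move=> h; apply: (@addrI _ x); rewrite addr0 -h. Qed.

Variable A : R -> Prop.
Hypothesis HA : ideal A.

Lemma A0 : A 0. Proof. by case: HA. Qed.
Lemma AD a b : A a -> A b -> A (a + b). Proof. by case: HA => _ H _; apply: H. Qed.
Lemma AM_ r a : A a -> A (r * a). Proof. by case: HA => _ _ H; apply: H. Qed.
Lemma AN a : A a -> A (- a). Proof. by move=> h; rewrite -mulN1r; apply: AM_. Qed.
Lemma AMr a r : A a -> A (a * r). Proof. by move=> h; rewrite mulrC; apply: AM_. Qed.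

Lemma AM_add F x y : AM A F x -> AM A F y -> AM A F (x + y).
Proof.
elim=> [|a f z Ha Hf _ IH] Hy; first by rewrite add0r.
by rewrite -addrA; apply: AMadd => //; apply: IH.
Qed.

Lemma AM_scale F r x : AM A F x -> AM A F (r *: x).
Proof.
elim=> [|a f z Ha Hf _ IH]; first by rewrite scaler0; exact: AM0.
by rewrite scalerDr scalerA; apply: AMadd => //; apply: AM_.
Qed.

Lemma AM_single F a f : A a -> F f -> AM A F (a *: f).
Proof. by move=> Ha Hf; rewrite -[_ *: f]addr0; apply: AMadd => //; exact: AM0. Qed.

Lemma AM_mono (F G : E -> Prop) x : (forall y, F y -> G y) -> AM A F x -> AM A G x.
Proof. move=> FG; elim=> [|a f z Ha Hf _ IH]; [exact: AM0 | apply: AMadd => //; exact: FG]. Qed.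

Lemma AM_sub F : submodule F -> forall x, AM A F x -> F x.
Proof.
case=> F0 FD FZ x; elim=> [|a f z Ha Hf _ IH] //; apply: FD => //; exact: FZ.
Qed.

Lemma AM_submod F : submodule (AM A F).
Proof. split; [exact: AM0 | move=> x y; exact: AM_add | move=> r x; exact: AM_scale]. Qed.

Lemma A_submod : submodule (A : R^o -> Prop).
Proof. split; [exact: A0 | move=> x y; exact: AD | move=> r x; exact: AM_]. Qed.

Lemma pure_AM (F : E -> Prop) f : pure F -> F f -> AM A (fun _ => True) f -> AM A F f.
Proof.
case=> HF Hpure Ff HAf.
pose N := quot A_submod.
pose n0 : N := qpi A_submod 1.
have := Hpure N [:: (n0, f)].
have H1 : forall p, p \in [:: (n0, f)] -> F p.2 by move=> p; rewrite inE => /eqP ->.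
have H2 : tensor_zero_on (fun _ => True) [:: (n0, f)].
  move=> T B [Bl1 Bl2 Br1 Br2]; rewrite big_seq1 /=.
  elim: HAf => [|a e y Ha _ _ IH].
    apply: dbl0; rewrite -Br1 // addr0 //.
  rewrite Br1 // IH addr0 Br2 //.
  have -> : a *: B n0 e = B (a *: n0) e by rewrite Bl2.
  have -> : a *: n0 = 0.
    rewrite /n0 -qpiZ; apply: etrans (qpi0 _); apply: qpi_eq.
    by rewrite subr0 /= /GRing.scale /= mulr1.
  apply: dbl0; rewrite -Bl1 // addr0 //.
move=> /(_ H1 H2).
pose T := quot (AM_submod F).
pose B (n : N) (y : E) : T := qpi (AM_submod F) ((val n : R) *: y).
have Hrep : forall r : R^o, A (val (qpi A_submod r) - r).
  by move=> r; apply: qvalP.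
have HB : bilinear_on F B.
  split.
  - move=> x n1 n2 Fx; rewrite /B -qpiD; apply: qpi_eq; rewrite -!scalerDl -scalerBl.
    apply: AM_single => //.
    have -> : val (n1 + n2) = val (qpi A_submod (val n1 + val n2)) by [].
    set u := val n1 + val n2.
    have := Hrep u; by [].
  - move=> x r n Fx; rewrite /B -qpiZ; apply: qpi_eq; rewrite scalerA -scalerBl.
    apply: AM_single => //.
    have -> : val (r *: n) = val (qpi A_submod (r * val n)) by [].
    exact: Hrep.
  - move=> n x y Fx Fy; by rewrite /B scalerDr qpiD.
  - move=> n r x Fx; by rewrite /B -qpiZ scalerA mulrC -scalerA.
move=> /(_ T B HB); rewrite big_seq1 /= /B => /qpi0P.
move=> h.
have -> : f = (val n0 : R) *: f - (val n0 - 1) *: f by rewrite scalerBl scale1r opprB addrC subrK.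
apply: AM_add => //; rewrite -scaleNr; apply: AM_single => //; apply: AN; exact: Hrep.
Qed.

End AMsec.


Section Main.
Variables (R : comPzRingType) (M : lmodType R) (n : nat) (Ms : nat -> M -> Prop).
Hypothesis Hpcs : pure_composition_series Ms n.
Hypothesis Hcyc : forall i, (0 < i <= n)%N -> cyclic_nonzero_quotient (Ms i) (Ms i.-1).
Hypothesis Hinc : forall i j, (0 < i)%N -> (i <= j)%N -> (j <= n)%N ->
     forall r : R, ann_quotient (Ms i) (Ms i.-1) r -> ann_quotient (Ms j) (Ms j.-1) r.

Lemma Ms_pure i : (i <= n)%N -> pure (Ms i).
Proof. by case: Hpcs => _ _ H _; apply: H. Qed.
Lemma Ms_sub i : (i <= n)%N -> submodule (Ms i).
Proof. by move=> h; case: (Ms_pure h). Qed.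
Lemma Ms0 i : (i <= n)%N -> Ms i 0. Proof. by move=> /Ms_sub []. Qed.
Lemma MsD i x y : (i <= n)%N -> Ms i x -> Ms i y -> Ms i (x + y).
Proof. by move=> /Ms_sub [] _ H _; apply: H. Qed.
Lemma MsZ i r x : (i <= n)%N -> Ms i x -> Ms i (r *: x).
Proof. by move=> /Ms_sub [] _ _ H; apply: H. Qed.
Lemma MsN i x : (i <= n)%N -> Ms i x -> Ms i (- x).
Proof. by move=> h hx; rewrite -scaleN1r; apply: MsZ. Qed.
Lemma MsB i x y : (i <= n)%N -> Ms i x -> Ms i y -> Ms i (x - y).
Proof. by move=> h hx hy; apply: MsD => //; apply: MsN. Qed.

Lemma Ms_mono i j : (i <= j)%N -> (j <= n)%N -> forall x, Ms i x -> Ms j x.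
Proof.
move=> lij; elim: j lij => [|j IH]; first by rewrite leqn0 => /eqP ->.
rewrite leq_eqVlt => /orP [/eqP -> //| lij] ljn x hx.
case: Hpcs => _ _ _ Hs; case: (Hs j ljn) => H _; apply: H; apply: IH => //.
exact: ltnW.
Qed.

Definition xg i : M := epsilon (inhabits 0)
  (fun x => Ms i x /\ forall y, Ms i y -> exists r, Ms i.-1 (y - r *: x)).

Lemma xgP i : (0 < i <= n)%N ->
  Ms i (xg i) /\ forall y, Ms i y -> exists r, Ms i.-1 (y - r *: xg i).
Proof.
move=> h; apply: (epsilon_spec (inhabits 0) (fun x => Ms i x /\ forall y, Ms i y -> exists r, Ms i.-1 (y - r *: x))).
by case: (Hcyc h) => [[x [hx H]] _]; exists x.
Qed.

Lemma gen_i i : (i <= n)%N -> forall m, Ms i m ->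
  exists c : nat -> R, m = \sum_(j < i) c j *: xg j.+1.
Proof.
elim: i => [|i IH] lin m hm.
  exists (fun _ => 0); rewrite big_ord0.
  by case: Hpcs => H _ _ _; apply/H.
have [_ /(_ m hm) [r hr]] := xgP (i:=i.+1) lin.
have [c hc] := IH (ltnW lin) _ hr.
exists (fun j => if j == i then r else c j).
rewrite big_ord_recr /= eqxx.
have -> : \sum_(j < i) (if widen_ord (leqnSn i) j == i :> nat then r else c (widen_ord (leqnSn i) j)) *: xg (widen_ord (leqnSn i) j).+1 = \sum_(j < i) c j *: xg j.+1.
  by apply: eq_bigr => j _ /=; rewrite ltn_eqF.
by rewrite -hc subrK.
Qed.

Lemma sum_in i (r : nat -> R) : (i <= n)%N -> Ms i (\sum_(j < i) r j *: xg j.+1).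
Proof.
move=> lin; apply: (big_ind (Ms i)); first exact: Ms0.
  by move=> x y; apply: MsD.
move=> j _; apply: MsZ => //; apply: (@Ms_mono j.+1) => //.
have : (0 < j.+1 <= n)%N by rewrite /= (leq_trans _ lin).
by move=> /xgP [].
Qed.


Lemma det_cong (A : R -> Prop) (HA : ideal A) m (X Y : 'M[R]_m) :
  (forall i j, A (X i j - Y i j)) -> A (\det X - \det Y).
Proof.
move=> H.
have Kadd : forall x1 x2 y1 y2, A (x1 - x2) -> A (y1 - y2) -> A ((x1 + y1) - (x2 + y2)).
  move=> x1 x2 y1 y2 h1 h2; rewrite opprD addrACA; exact: AD.
have Kmul : forall x1 x2 y1 y2, A (x1 - x2) -> A (y1 - y2) -> A ((x1 * y1) - (x2 * y2)).
  move=> x1 x2 y1 y2 h1 h2.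
  have -> : x1 * y1 - x2 * y2 = (x1 - x2) * y1 + x2 * (y1 - y2).
    by rewrite mulrBl mulrBr addrA subrK.
  by apply: (AD HA); [apply: (AMr HA) | apply: (AM_ HA)].
rewrite /determinant.
apply: (big_ind2 (fun a b => A (a - b))); first by rewrite subrr; exact: (A0 HA).
  by move=> a1 a2 b1 b2; apply Kadd.
move=> sg _; apply Kmul; first by rewrite subrr; exact: (A0 HA).
apply: (big_ind2 (fun a b => A (a - b))); first by rewrite subrr; exact: (A0 HA).
  by move=> a1 a2 b1 b2; apply Kmul.
by move=> i _; apply: H.
Qed.

Definition AA : R -> Prop := ann_quotient (Ms n) (Ms n.-1).

Lemma AA_ideal : (0 < n)%N -> ideal AA.
Proof.
move=> n0; have ln : (n.-1 <= n)%N by exact: leq_pred.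
split.
- by move=> x _; rewrite scale0r; apply: Ms0.
- by move=> a b ha hb x hx; rewrite scalerDl; apply: MsD => //; [apply: ha | apply: hb].
- by move=> r a ha x hx; rewrite -scalerA; apply: MsZ => //; apply: ha.
Qed.

Lemma AA_not1 : (0 < n)%N -> ~ AA 1.
Proof.
move=> n0 h; have : (0 < n <= n)%N by rewrite n0 leqnn.
move=> /Hcyc [_ [y [hy ny]]]; apply: ny; rewrite -[y]scale1r; exact: h.
Qed.

Lemma Ai_sub i r : (0 < i <= n)%N -> ann_quotient (Ms i) (Ms i.-1) r -> AA r.
Proof. by case/andP=> i0 lin h; apply: (Hinc i0 lin (leqnn n)). Qed.

Lemma lem_e i : (i < n)%N -> forall y, AM AA (Ms i.+1) y ->
  exists t, AA t /\ Ms i (y - t *: xg i.+1).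
Proof.
move=> lin y; have n0 : (0 < n)%N by apply: leq_ltn_trans lin.
have Hid := AA_ideal n0.
have lin' : (i <= n)%N by exact: ltnW.
elim=> [|a f z Ha Hf _ [t [Ht Hz]]].
  by exists 0; split; [exact: (A0 Hid) | rewrite scale0r subr0; exact: Ms0].
have [_ /(_ f Hf) [r hr]] := xgP (i:=i.+1) lin.
exists (a * r + t); split; first by apply: (AD Hid) => //; apply: (AMr Hid).
have -> : a *: f + z - (a * r + t) *: xg i.+1 = a *: (f - r *: xg i.+1) + (z - t *: xg i.+1).
  by rewrite scalerDl -scalerA scalerBr opprD addrACA.
by apply: MsD => //; apply: MsZ.
Qed.


Lemma lem_d i : (i <= n)%N -> forall r : nat -> R,
  AM AA (Ms i) (\sum_(j < i) r j *: xg j.+1) -> forall j, (j < i)%N -> AA (r j).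
Proof.
elim: i => [|i IH] lin r Hv j lji; first by [].
have n0 : (0 < n)%N by apply: leq_trans lin.
have Hid := AA_ideal n0.
have lin' : (i <= n)%N by exact: ltnW.
set w := \sum_(j < i) r j *: xg j.+1.
have Hv' : \sum_(j < i.+1) r j *: xg j.+1 = w + r i *: xg i.+1 by rewrite big_ord_recr.
rewrite Hv' in Hv.
have [t [Ht Hvt]] := lem_e lin Hv.
have Hw : Ms i w by apply: sum_in.
have Hri : AA (r i).
  have Hx : Ms i ((r i - t) *: xg i.+1).
    have -> : (r i - t) *: xg i.+1 = (w + r i *: xg i.+1 - t *: xg i.+1) - w.
      by rewrite scalerBl -(addrA w) [RHS]addrC addKr.
    exact: MsB.
  have Hann : ann_quotient (Ms i.+1) (Ms i.+1.-1) (r i - t).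
    move=> y hy /=; have [_ /(_ y hy) [r' hr']] := xgP (i:=i.+1) lin.
    have -> : (r i - t) *: y = (r i - t) *: (y - r' *: xg i.+1) + r' *: ((r i - t) *: xg i.+1).
      by rewrite scalerBr !scalerA mulrC subrK.
    by apply: MsD => //; apply: MsZ.
  have := Ai_sub (i:=i.+1) lin Hann.
  move=> h; have := AD Hid h Ht; by rewrite subrK.
move: lji; rewrite ltnS leq_eqVlt => /orP [/eqP -> // | lji].
apply: (IH lin' r) => //.
apply: (pure_AM Hid (Ms_pure lin') Hw).
have -> : w = (w + r i *: xg i.+1) + (- r i) *: xg i.+1 by rewrite scaleNr addrK.
apply: AM_add; first by apply: AM_mono Hv.
by apply: AM_single => //; apply: (AN Hid).
Qed.


Lemma lower (s : seq M) : generates s -> (n <= size s)%N.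
Proof.
move=> Hg; rewrite leqNgt; apply/negP => lkn.
set k := size s in lkn.
have n0 : (0 < n)%N by apply: leq_ltn_trans lkn.
have Hid := AA_ideal n0.
pose dd := fun l => epsilon (inhabits (fun _ => 0 : R))
   (fun c : nat -> R => s`_l = \sum_(j < n) c j *: xg j.+1).
have ddP : forall l, s`_l = \sum_(j < n) dd l j *: xg j.+1.
  move=> l; apply: (epsilon_spec (inhabits (fun _ => 0 : R))
   (fun c : nat -> R => s`_l = \sum_(j < n) c j *: xg j.+1)).
  apply: gen_i => //; by case: Hpcs.
pose cc := fun i => epsilon (inhabits (fun _ => 0 : R))
   (fun c : nat -> R => xg i.+1 = \sum_(l < k) c l *: s`_l).
have ccP : forall i, xg i.+1 = \sum_(l < k) cc i l *: s`_l.
  move=> i; apply: (epsilon_spec (inhabits (fun _ => 0 : R))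
   (fun c : nat -> R => xg i.+1 = \sum_(l < k) c l *: s`_l)).
  have [c0 hc0] := Hg (xg i.+1).
  exists (fun l => if @insub nat (fun x => x < k)%N 'I_k l is Some o then c0 o else 0).
  rewrite hc0; apply: eq_bigr => o _; by rewrite valK.
have key : forall i j, (i < n)%N -> (j < n)%N ->
    AA (\sum_(l < k) cc i l * dd l j - (j == i :> nat)%:R).
  move=> i j lin ljn.
  apply: (@lem_d n (leqnn n) (fun j => \sum_(l < k) cc i l * dd l j - (j == i :> nat)%:R)) => //.
  have -> : \sum_(j < n) (\sum_(l < k) cc i l * dd l j - (j == i :> nat)%:R) *: xg j.+1 = 0.
    under eq_bigr do rewrite scalerBl.
    rewrite sumrB.
    have -> : \sum_(j < n) (\sum_(l < k) cc i l * dd l j) *: xg j.+1 = xg i.+1.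
      rewrite [RHS]ccP.
      under eq_bigr do rewrite scaler_suml.
      rewrite exchange_big /=; apply: eq_bigr => l _.
      rewrite ddP scaler_sumr; apply: eq_bigr => j' _; by rewrite scalerA.
    have -> : \sum_(j < n) (j == i :> nat)%:R *: xg j.+1 = xg i.+1.
      rewrite (bigD1 (Ordinal lin)) //= eqxx scale1r big1 ?addr0 // => j' hj.
      have -> : (nat_of_ord j' == i) = false by apply/negbTE; exact: hj.
      by rewrite scale0r.
    by rewrite subrr.
  exact: AM0.
pose C : 'M[R]_n := \matrix_(i, l) (if (l < k)%N then cc i l else 0).
pose D : 'M[R]_n := \matrix_(l, j) (if (l < k)%N then dd l j else 0).
have HCD : forall i j : 'I_n, (C *m D) i j = \sum_(l < k) cc i l * dd l j.
  move=> i j; rewrite mxE.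
  rewrite (big_ord_widen n (fun l => cc i l * dd l j) (ltnW lkn)).
  rewrite [RHS]big_mkcond; apply: eq_bigr => l _; rewrite !mxE; by case: ifP => _; rewrite ?mul0r.
have HdetC : \det C = 0.
  rewrite (expand_det_col C (Ordinal lkn)) big1 // => i _.
  by rewrite mxE ltnn mul0r.
have := det_cong Hid (X := C *m D) (Y := 1%:M).
rewrite det_mulmx HdetC mul0r det1 sub0r.
have : forall i j : 'I_n, AA ((C *m D) i j - (1%:M : 'M[R]_n) i j).
  move=> i j; rewrite HCD mxE eq_sym; exact: key.
move=> H /(_ H) /(AN Hid); rewrite opprK; exact: AA_not1.
Qed.


Lemma upper : exists s : seq M, size s = n /\ generates s.
Proof.
exists (mkseq (fun i => xg i.+1) n); split; first exact: size_mkseq.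
move=> m.
have hm : Ms n m by case: Hpcs => _ H _ _; exact: H.
have [c hc] := gen_i (leqnn n) hm.
rewrite size_mkseq; exists (fun i => c i); rewrite hc.
by apply: eq_bigr => i _; rewrite nth_mkseq.
Qed.

End Main.

Theorem proposition1p4 (R : comPzRingType) (M : lmodType R) (n : nat)
    (Ms : nat -> M -> Prop) :
  arithmetic R ->
  finitely_generated M ->
  pure_composition_series Ms n ->
  (forall i, (0 < i <= n)%N -> cyclic_nonzero_quotient (Ms i) (Ms i.-1)) ->
  (forall i j, (0 < i)%N -> (i <= j)%N -> (j <= n)%N ->
     forall r : R, ann_quotient (Ms i) (Ms i.-1) r -> ann_quotient (Ms j) (Ms j.-1) r) ->
  min_num_generators M n.
Proof.
move=> _ _ Hpcs Hcyc Hinc; split; first exact: (upper Hpcs).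
move=> s; exact: (lower Hpcs Hcyc Hinc).
Qed.
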